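(* Let $P_m(z)=\sum_{j=0}^m \frac{(2m-j)!}{j!(m-j)!}z^j$ and $R_m(z)=P_m(z)/P_m(-z)$. If $m$ is even, let $\hat z_m(t,0)$ be the solution of $R_m(z)=e^t$ satisfying $\hat z_m(t,0)=D_m/t+\mathcal{O}(1)$ as $|t|\to0$ for some constant $D_m>0$; if $m$ is odd, let $\hat z_m(t,\pi)$ be the solution of $R_m(z)=-e^t$ satisfying $\hat z_m(t,\pi)=E_m/t+\mathcal{O}(1)$ as $|t|\to0$ for some constant $E_m>0$. Then, as $|t|\to0$, $$R_m'(\hat z_m(t,0))=\mathcal{O}(t^2)\ \text{ for even } m,\qquad R_m'(\hat z_m(t,\pi))=\mathcal{O}(t^2)\ \text{ for odd } m.$$
   Context: $R_m$ is the stability function of the $m$-stage Gauss Runge–Kutta method (the $(m,m)$-Padé approximant of $e^z$). For even $m$ exactly one solution of $R_m(z)=e^t$, and for odd $m$ exactly one solution of $R_m(z)=-e^t$, tends to infinity as $t\to0$, with the stated asymptotics. *)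

(* Defs.v *)
From HB Require Import structures.
From mathcomp Require Import all_boot all_order all_algebra.
From mathcomp Require Import complex.
From mathcomp Require Import all_classical all_reals all_analysis.
Set Implicit Arguments. Unset Strict Implicit. Unset Printing Implicit Defensive.
Import Order.TTheory GRing.Theory Num.Theory.
Local Open Scope ring_scope.
Local Open Scope complex_scope.

Section Gauss.
Variable R : realType.
Local Notation C := R[i].

Definition cabs (z : C) : R := Normc.normc z.

Definition cexp (z : C) : C :=
  (expR (complex.Re z) * cos (complex.Im z)) +i* (expR (complex.Re z) * sin (complex.Im z)).

Definition Pm (m : nat) : {poly C} :=
  \poly_(j < m.+1) (((2 * m - j)`!)%:R / ((j`! * (m - j)`!)%:R) : C).

Definition Rm (m : nat) (z : C) : C := (Pm m).[z] / (Pm m).[- z].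

(* R_m'(z): derivative of the rational function R_m, by the quotient rule
   (d/dz P_m(-z) = - P_m'(-z)). *)
Definition Rm' (m : nat) (z : C) : C :=
  ((Pm m)^`().[z] * (Pm m).[- z] + (Pm m).[z] * (Pm m)^`().[- z])
  / ((Pm m).[- z] ^+ 2).

End Gauss.

(* Main.v *)
Require Import Defs.
From HB Require Import structures.
From mathcomp Require Import all_boot all_order all_algebra.
From mathcomp Require Import complex.
From mathcomp Require Import all_classical all_reals all_analysis.
From mathcomp Require Import ring lra zify.
Import Order.TTheory GRing.Theory Num.Theory.
Local Open Scope ring_scope.
Local Open Scope complex_scope.

Section S.
Variable R : realType.
Local Notation C := R[i].

Lemma cabsE (z : C) : `|z| = (cabs z)%:C.
Proof. by case: z => a b; rewrite normc_def. Qed.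
Lemma cabs_ge0 (z : C) : 0 <= cabs z.
Proof. by case: z => a b; apply: sqrtr_ge0. Qed.

Lemma cabsM (x y : C) : cabs (x * y) = cabs x * cabs y.
Proof. exact: Normc.normcM. Qed.

Lemma cabsD (x y : C) : cabs (x + y) <= cabs x + cabs y.
Proof. by rewrite -lecR rmorphD /= -!cabsE ler_normD. Qed.

Lemma cabsN (x : C) : cabs (- x) = cabs x.
Proof. have := normrN x; rewrite !cabsE; by move/(congr1 (@complex.Re R)). Qed.

Lemma cabsX (x : C) n : cabs (x ^+ n) = cabs x ^+ n.
Proof. have := normrX n x; rewrite !cabsE -rmorphXn; by move/(congr1 (@complex.Re R)). Qed.

Lemma cabsV (x : C) : cabs (x^-1) = (cabs x)^-1.
Proof. exact: Normc.normcV. Qed.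

Lemma cabs_real (a : R) : cabs a%:C = `|a|.
Proof. have := normc_def a%:C; rewrite cabsE /= expr0n /= addr0 sqrtr_sqr; by move/(congr1 (@complex.Re R)). Qed.

Lemma cabs_nat n : cabs (n%:R : C) = n%:R.
Proof. by rewrite -(rmorph_nat (real_complex R)) cabs_real normr_nat. Qed.

Lemma cabs_sum (I : finType) (F : I -> C) :
  cabs (\sum_i F i) <= \sum_i cabs (F i).
Proof.
rewrite -lecR rmorph_sum /= -cabsE.
by rewrite (le_trans (ler_norm_sum _ _ _)) //.
Qed.

Lemma polybound (p : {poly C}) j k : (size p + j <= k.+1)%N ->
  forall z, 1 <= cabs z ->
  cabs p.[z] * cabs z ^+ j <= (\sum_(i < size p) cabs p`_i) * cabs z ^+ k.
Proof.
move=> hs z hz; rewrite horner_coef.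
have hz0 : 0 <= cabs z ^+ j by apply: exprn_ge0; apply: cabs_ge0.
have := ler_wpM2r hz0 (@cabs_sum _ (fun i : 'I_(size p) => p`_i * z ^+ i)).
move/le_trans; apply.
rewrite !mulr_suml; apply: ler_sum => i _.
rewrite cabsM cabsX -mulrA -exprD; apply: ler_wpM2l; first exact: cabs_ge0.
apply: ler_weXn2l => //.
have := ltn_ord i; lia.
Qed.

Definition rr (m : nat) : {poly C} :=
  \poly_(j < m) (((2 * m - j)`!)%:R / ((j`! * (m - j)`!)%:R) : C).

Lemma size_rr m : (size (rr m) <= m)%N.
Proof. exact: size_poly. Qed.

Lemma Pm_dec m : Pm R m = 'X^m + rr m.
Proof.
apply/polyP => i; rewrite coefD coefXn !coef_poly.
case: (ltngtP i m) => [him|him|->].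
- by rewrite ltnS ltnW // add0r.
- by rewrite ltnS leqNgt him /= addr0.
- rewrite ltnSn addr0 subnn mul2n -addnn addnK fact0 muln1.
  by rewrite divff // pnatr_eq0 -lt0n fact_gt0.
Qed.

Lemma cabs6 (x1 x2 x3 x4 x5 x6 : C) :
  cabs (x1 + x2 + x3 + x4 + x5 + x6) <=
  cabs x1 + cabs x2 + cabs x3 + cabs x4 + cabs x5 + cabs x6.
Proof.
do 5 (apply: le_trans (cabsD _ _) _; rewrite lerD2r).
exact: lexx.
Qed.

Lemma numer_id n (r : {poly C}) (z : C) :
  let m := n.+1 in
  (z ^+ n * m%:R + r^`().[z]) * ((- z) ^+ m + r.[- z]) +
  (z ^+ m + r.[z]) * ((- z) ^+ n * m%:R + r^`().[- z]) =
  m%:R * z ^+ n * r.[- z] + r^`().[z] * (- z) ^+ m + r^`().[z] * r.[- z] +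
  z ^+ m * r^`().[- z] + r.[z] * (m%:R * (- z) ^+ n) + r.[z] * r^`().[- z].
Proof. move=> m; rewrite /m !exprS; ring. Qed.

Lemma core n : exists K M : R, 1 <= M /\
  forall z : C, M <= cabs z -> cabs (Rm' n.+1 z) * cabs z ^+ 2 <= K.
Proof.
set m := n.+1; set r := rr m.
have hP : Pm R m = 'X^m + r := Pm_dec m.
have hd : (Pm R m)^`() = 'X^n *+ m + r^`() by rewrite hP derivD derivXn.
have hsr : (size r^`() <= n)%N.
  have [->|r0] := eqVneq r 0; first by rewrite deriv0 size_poly0.
  have h1 := lt_size_deriv r0; have h2 : (size r <= n.+1)%N := size_rr m; lia.
set S := \sum_(i < size r) cabs r`_i.
set S' := \sum_(i < size r^`()) cabs r^`()`_i.
have S0 : 0 <= S by apply: sumr_ge0 => i _; apply: cabs_ge0.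
have S'0 : 0 <= S' by apply: sumr_ge0 => i _; apply: cabs_ge0.
exists (4 * (2 * m%:R * S + 2 * S' + 2 * S * S')), (1 + 2 * S).
split; first lra.
move=> z hz; set a := cabs z.
have a1 : 1 <= a by rewrite /a; lra.
have X1 : 1 <= a ^+ n by apply: exprn_ege1.
have hu : forall w, cabs w = a -> cabs r.[w] <= S * a ^+ n.
  move=> w hw.
  have hs1 : (size r + 1 <= m.+1)%N by rewrite addn1 ltnS; exact: size_rr.
  have := @polybound r 1 m hs1 w; rewrite hw => /(_ a1).
  rewrite expr1 exprS -/S => h.
  have : cabs r.[w] * a <= (S * a ^+ n) * a by rewrite (mulrC a) mulrA in h.
  by rewrite ler_pM2r //; lra.
have hv : forall w, cabs w = a -> cabs r^`().[w] * a <= S' * a ^+ n.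
  move=> w hw.
  have hs2 : (size r^`() + 2 <= m.+1)%N by rewrite /m; lia.
  have := @polybound r^`() 2 m hs2 w; rewrite hw -/S' => /(_ a1).
  move=> h.
  have : (cabs r^`().[w] * a) * a <= (S' * a ^+ n) * a by rewrite -mulrA -expr2 -mulrA -exprSr.
  by rewrite ler_pM2r //; lra.
rewrite /Rm' hd hP !(hornerD, hornerMn, hornerXn) -[z ^+ n *+ m]mulr_natr -[(- z) ^+ n *+ m]mulr_natr numer_id.
set Q := (- z) ^+ m + r.[- z].
have ma : cabs (- z) = a by rewrite cabsN.
have hq : a * a ^+ n / 2 <= cabs Q.
  have e : (- z) ^+ m = Q + - r.[- z] by rewrite /Q addrK.
  have := cabsD Q (- r.[- z]); rewrite -e cabsX ma cabsN exprS.
  have hS : 2 * S <= a by rewrite /a; lra.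
  have hSX : 2 * S * a ^+ n <= a * a ^+ n by apply: ler_wpM2r => //; lra.
  have := hu _ ma; lra.
set X := a ^+ n in hu hv hq X1 *.
have hu1 := hu _ (erefl a); have hu2 := hu _ ma.
have hv1 := hv _ (erefl a); have hv2 := hv _ ma.
set u1 := cabs r.[z] in hu1 *; set u2 := cabs r.[- z] in hu2 *.
set v1 := cabs r^`().[z] in hv1 *; set v2 := cabs r^`().[- z] in hv2 *.
have hN : cabs (m%:R * z ^+ n * r.[- z] + r^`().[z] * (- z) ^+ m + r^`().[z] * r.[- z] +
  z ^+ m * r^`().[- z] + r.[z] * (m%:R * (- z) ^+ n) + r.[z] * r^`().[- z])
  <= (2 * m%:R * S + 2 * S' + 2 * S * S') * X ^+ 2.
  apply: (le_trans (cabs6 _ _ _ _ _ _)).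
  rewrite !cabsM !cabsX !cabs_nat ma -/u1 -/u2 -/v1 -/v2 -/X -/a exprS -/X.
  have u10 : 0 <= u1 by apply: cabs_ge0.
  have u20 : 0 <= u2 by apply: cabs_ge0.
  have v10 : 0 <= v1 by apply: cabs_ge0.
  have v20 : 0 <= v2 by apply: cabs_ge0.
  have m0 : 0 <= m%:R :> R by apply: ler0n.
  have w1 : v1 <= S' * X.
    have : v1 <= v1 * a by rewrite ler_peMr.
    lra.
  have w2 : v2 <= S' * X.
    have : v2 <= v2 * a by rewrite ler_peMr.
    lra.
  rewrite [a ^+ m]exprS -/X expr1.
  have p1 : m%:R * X * u2 <= m%:R * X * (S * X) by apply: ler_wpM2l => //; apply: mulr_ge0; lra.
  have p2 : v1 * a <= S' * X := hv1.
  have p3 : v1 * u2 <= (S' * X) * (S * X) by apply: ler_pM.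
  have p5 : u1 * (m%:R * X) <= (S * X) * (m%:R * X) by apply: ler_wpM2r => //; apply: mulr_ge0; lra.
  have p6 : u1 * v2 <= (S * X) * (S' * X) by apply: ler_pM.
  have X0 : 0 <= X by lra.
  have p2' : v1 * (a * X) <= (S' * X) * X.
    rewrite [v1 * _]mulrA; have h := ler_wpM2r X0 hv1. exact h.
  have p4' : v2 * (a * X) <= (S' * X) * X.
    rewrite [v2 * _]mulrA; have h := ler_wpM2r X0 hv2. exact h.
  lra.
have e : forall N : C, cabs (N / Q ^+ 2) = cabs N / cabs Q ^+ 2.
  by move=> N; rewrite cabsM cabsV cabsX.
rewrite e.
set c := cabs _.
have c0 : 0 <= c by apply: cabs_ge0.
set q := cabs Q in hq *.
set K := (2 * m%:R * S + 2 * S' + 2 * S * S') in hN *.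
have hc : c <= K * X ^+ 2 by exact: hN.
have K0 : 0 <= K.
  have h1 : 0 <= m%:R :> R by apply: ler0n.
  have h2 : 0 <= S * S' by apply: mulr_ge0.
  have h3 : 0 <= m%:R * S by apply: mulr_ge0.
  rewrite /K; lra.
have aX0 : 0 < a * X by apply: mulr_gt0; lra.
have q0 : 0 < q by lra.
rewrite mulrAC ler_pdivrMr; last by apply: exprn_gt0.
have s2 : (a * X) ^+ 2 <= (2 * q) ^+ 2 by rewrite !expr2; apply: ler_pM; lra.
have s3 : K * (a * X) ^+ 2 <= K * (2 * q) ^+ 2 by apply: ler_wpM2l.
have s1' : c * a ^+ 2 <= K * X ^+ 2 * a ^+ 2 by apply: ler_wpM2r => //; apply: exprn_ge0; lra.
apply: (le_trans s1').
have -> : K * X ^+ 2 * a ^+ 2 = K * (a * X) ^+ 2 by rewrite exprMn; ring.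
apply: (le_trans s3).
rewrite exprMn; lra.
Qed.
Lemma cabs0 : cabs (0 : C) = 0.
Proof. exact: (cabs_nat 0). Qed.

Lemma core_all m : exists K M : R, 1 <= M /\
  forall z : C, M <= cabs z -> cabs (Rm' m z) * cabs z ^+ 2 <= K.
Proof.
case: m => [|n]; last exact: core.
exists 0, 1; split => // z _.
have r0 : rr 0 = 0 by apply/eqP; rewrite -size_poly_eq0 -leqn0 size_rr.
have hd : (Pm R 0)^`() = 0 by rewrite Pm_dec r0 addr0 expr0 derivC.
by rewrite /Rm' hd !horner0 mul0r mulr0 addr0 mul0r cabs0 mul0r.
Qed.

Lemma main_bound m (D : R) (zhat : C -> C) : 0 < D ->
  (exists K d : R, 0 < d /\
        forall t : C, 0 < cabs t < d -> cabs (zhat t - D%:C / t) <= K) ->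
  exists K d : R, 0 < d /\
        forall t : C, 0 < cabs t < d ->
          cabs (Rm' m (zhat t)) <= K * cabs t ^+ 2.
Proof.
move=> D0 [K0 [d0 [d00 h0]]].
have [K1 [M [M1 hM]]] := core_all m.
have A0 : 0 < 2 * (`|K0| + M) by have := normr_ge0 K0; lra.
exists (4 * K1 / D ^+ 2), (Num.min d0 (D / (2 * (`|K0| + M)))).
split.
  by rewrite lt_min d00 divr_gt0.
move=> t /andP [t0]; rewrite lt_min => /andP [td0 td1].
set tau := cabs t in t0 td0 td1 *.
have hK := h0 t; rewrite t0 td0 /= in hK; have {}hK := hK isT.
set w := cabs (zhat t).
have hDt : cabs (D%:C / t) = D / tau.
  by rewrite cabsM cabsV cabs_real ger0_norm //; lra.
have tri : D / tau <= w + K0.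
  rewrite -hDt.
  have -> : D%:C / t = zhat t + - (zhat t - D%:C / t) by rewrite opprB addrC subrK.
  apply: (le_trans (cabsD _ _)); rewrite cabsN -/w; lra.
have tri2 : D <= tau * w + tau * K0.
  have := ler_wpM2l (ltW t0) tri; rewrite mulrDr [tau * (D / tau)]mulrC divfK ?(gt_eqF t0) //.
have hK0 : tau * K0 <= tau * `|K0| by apply: ler_wpM2l; [lra | apply: ler_norm].
have td2 : tau * (2 * (`|K0| + M)) < D by rewrite ltr_pdivlMr // mulrC in td1.
have tM : 0 <= tau * M by apply: mulr_ge0; lra.
have tK : 0 <= tau * `|K0| by apply: mulr_ge0; [lra | apply: normr_ge0].
have e1 : M <= w.
  have : tau * M < tau * w by lra.
  rewrite ltr_pM2l // => h; lra.
have e2 : D <= 2 * tau * w by lra.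
have := hM _ e1; rewrite -/w => hR.
set c := cabs (Rm' m (zhat t)) in hR *.
have c0 : 0 <= c by apply: cabs_ge0.
rewrite mulrAC ler_pdivlMr; last by apply: exprn_gt0.
have s1 : D ^+ 2 <= (2 * tau * w) ^+ 2 by rewrite !expr2; apply: ler_pM; lra.
apply: (le_trans (ler_wpM2l c0 s1)).
have -> : c * (2 * tau * w) ^+ 2 = 4 * tau ^+ 2 * (c * w ^+ 2) by rewrite !exprMn; ring.
have -> : 4 * K1 * tau ^+ 2 = 4 * tau ^+ 2 * K1 by ring.
apply: ler_wpM2l hR.
by apply: mulr_ge0; [lra | apply: exprn_ge0; lra].
Qed.

End S.

Theorem lemma5 (R : realType) (m : nat) :
  (* even m: the solution of R_m(z) = e^t with zhat(t) = D/t + O(1) *)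
  (~~ odd m ->
   forall (D : R) (zhat : R[i] -> R[i]),
     0 < D ->
     (exists2 d : R, 0 < d &
        forall t : R[i], 0 < cabs t < d -> Rm m (zhat t) = cexp t) ->
     (exists K d : R, 0 < d /\
        forall t : R[i], 0 < cabs t < d -> cabs (zhat t - D%:C / t) <= K) ->
     exists K d : R, 0 < d /\
        forall t : R[i], 0 < cabs t < d ->
          cabs (Rm' m (zhat t)) <= K * cabs t ^+ 2) /\
  (* odd m: the solution of R_m(z) = - e^t with zhat(t) = E/t + O(1) *)
  (odd m ->
   forall (E : R) (zhat : R[i] -> R[i]),
     0 < E ->
     (exists2 d : R, 0 < d &
        forall t : R[i], 0 < cabs t < d -> Rm m (zhat t) = - cexp t) ->
     (exists K d : R, 0 < d /\
        forall t : R[i], 0 < cabs t < d -> cabs (zhat t - E%:C / t) <= K) ->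
     exists K d : R, 0 < d /\
        forall t : R[i], 0 < cabs t < d ->
          cabs (Rm' m (zhat t)) <= K * cabs t ^+ 2).
Proof.
split=> _ D zhat D0 _ h; exact: (@main_bound R m D zhat D0 h).
Qed.
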